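(* Let $f\in Lip_d(I)$ and $b_r\in Lip_d(I)$ ($r\in\mathbb{N}$) with $b_r(x_0)=f(x_0)$, $b_r(x_N)=f(x_N)$ and $\sup_r\|b_r\|_\infty<\infty$, with (Hölder-)Lipschitz constants $k_f$ and $k_{b_r}$ respectively. Let the scaling functions $\alpha_{i,r}\in Lip_d(I)$ have Lipschitz constants $k_{\alpha_r}$, with $\|\alpha\|_\infty<1$. Let $\mathcal{P}(I)$ be the set of partitions $\Delta=\{x_0,x_1,\dots,x_N\}$ of $I=[x_0,x_N]$ with $x_0<x_1<\dots<x_N$, viewed as vectors in $\mathbb{R}^{N+1}$ with the Euclidean norm $\|\cdot\|_2$. Then the map $\mathcal{D}:\mathcal{P}(I)\to C(I)$, $\mathcal{D}(\Delta)=f^\alpha_{\Delta,b}$, is continuous (with respect to the supremum norm on $C(I)$).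
   Context: For a partition $\Delta: x_0<\dots<x_N$ of $I$: $I_i=[x_{i-1},x_i]$, $l_i^\Delta:I\to I_i$ the affine bijection $l_i^\Delta(x)=\frac{x_i-x_{i-1}}{x_N-x_0}x+\frac{x_Nx_{i-1}-x_0x_i}{x_N-x_0}$, $Q_i=(l_i^\Delta)^{-1}$. $Lip_d(I)$ ($0<d\le1$): real functions $g$ on $I$ with $\sup_{x\ne y}|g(x)-g(y)|/|x-y|^d<\infty$; this supremum is the Lipschitz constant of $g$. $\|\alpha\|_\infty:=\sup_r\max_i\|\alpha_{i,r}\|_\infty$. The non-stationary $\alpha$-fractal function $f^\alpha_{\Delta,b}$ is the uniform limit, independent of $g\in C_f(I)=\{g\in C(I):g(x_0)=f(x_0),g(x_N)=f(x_N)\}$, of $T^{\alpha_1}\circ\cdots\circ T^{\alpha_r}g$, where $(T^{\alpha_r}g)(x)=f(x)+\alpha_{i,r}(Q_i(x))(g-b_r)(Q_i(x))$ for $x\in I_i$. *)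

(* Defs.v *)
From Stdlib Require Import Reals Lra ClassicalEpsilon.
Open Scope R_scope.

(* A partition Delta : x_0 < x_1 < ... < x_N of I = [a, c], stored as a
   sequence nat -> R; only the entries 0..N matter. *)
Definition is_partition (a c : R) (N : nat) (Delta : nat -> R) : Prop :=
  (1 <= N)%nat /\ Delta 0%nat = a /\ Delta N = c /\
  (forall i : nat, (i < N)%nat -> Delta i < Delta (S i)).

Definition dist2 (N : nat) (Delta Delta' : nat -> R) : R :=
  sqrt (sum_f_R0 (fun i => (Delta i - Delta' i) ^ 2) N).

Definition Lip_d (a c d : R) (g : R -> R) : Prop :=
  exists K : R, forall x y : R, a <= x <= c -> a <= y <= c -> x <> y ->
    Rabs (g x - g y) <= K * Rpower (Rabs (x - y)) d.

Definition cont_on (a c : R) (g : R -> R) : Prop :=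
  forall x, a <= x <= c -> forall eps, 0 < eps -> exists delta, 0 < delta /\
    forall y, a <= y <= c -> Rabs (y - x) < delta -> Rabs (g y - g x) < eps.

Definition l_map (N : nat) (Delta : nat -> R) (i : nat) (x : R) : R :=
  (Delta i - Delta (i - 1)%nat) / (Delta N - Delta 0%nat) * x
  + (Delta N * Delta (i - 1)%nat - Delta 0%nat * Delta i) / (Delta N - Delta 0%nat).

(* Q_i = (l_i^Delta)^{-1}, written out explicitly. *)
Definition Q_map (N : nat) (Delta : nat -> R) (i : nat) (y : R) : R :=
  (Delta N - Delta 0%nat) / (Delta i - Delta (i - 1)%nat) * (y - Delta (i - 1)%nat)
  + Delta 0%nat.

(* Index i in 1..N of a subinterval I_i = [x_{i-1}, x_i] containing x:
   the least i in 1..N-1 with x <= x_i, and N otherwise.  (At knots, where two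
   subintervals meet, the two possible definitions of T agree on C_f(I).) *)
Fixpoint first_le (Delta : nat -> R) (x : R) (i k : nat) : nat :=
  match k with
  | O => i
  | S k' => if Rle_dec x (Delta i) then i else first_le Delta x (S i) k'
  end.

Definition seg_index (N : nat) (Delta : nat -> R) (x : R) : nat :=
  first_le Delta x 1%nat (N - 1)%nat.

Definition T_op (N : nat) (Delta : nat -> R) (f : R -> R) (b : nat -> R -> R)
  (alpha : nat -> nat -> R -> R) (r : nat) (g : R -> R) : R -> R :=
  fun x => let i := seg_index N Delta x in
           let q := Q_map N Delta i x in
           f x + alpha i r q * (g q - b r q).

Fixpoint iterT (N : nat) (Delta : nat -> R) (f : R -> R) (b : nat -> R -> R)
  (alpha : nat -> nat -> R -> R) (k n : nat) (g : R -> R) : R -> R :=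
  match n with
  | O => g
  | S n' => T_op N Delta f b alpha k (iterT N Delta f b alpha (S k) n' g)
  end.

Definition is_ns_fractal (N : nat) (Delta : nat -> R) (f : R -> R)
  (b : nat -> R -> R) (alpha : nat -> nat -> R -> R) (phi : R -> R) : Prop :=
  let a := Delta 0%nat in let c := Delta N in
  forall g : R -> R, cont_on a c g -> g a = f a -> g c = f c ->
    forall eps, 0 < eps -> exists M : nat, forall r : nat, (M <= r)%nat ->
      forall x, a <= x <= c ->
        Rabs (iterT N Delta f b alpha 1%nat r g x - phi x) < eps.

Definition ns_fractal (N : nat) (Delta : nat -> R) (f : R -> R)
  (b : nat -> R -> R) (alpha : nat -> nat -> R -> R) : R -> R :=
  epsilon (inhabits (fun _ : R => 0)) (is_ns_fractal N Delta f b alpha).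

(* Main.v *)
Require Import Defs.
From Stdlib Require Import Reals Lra Lia ClassicalEpsilon.
Open Scope R_scope.

Definition UC (a c : R) (g : R -> R) : Prop :=
  forall eps, 0 < eps -> exists eta, 0 < eta /\ forall y y', a <= y <= c -> a <= y' <= c ->
    Rabs (y - y') < eta -> Rabs (g y - g y') < eps.

Lemma Rpower_pos' : forall x y, 0 < Rpower x y.
Proof. intros; unfold Rpower; apply exp_pos. Qed.

Lemma Lip_UC : forall a c d g, 0 < d -> Lip_d a c d g -> UC a c g.
Proof.
  intros a c d g Hd [K HK] eps Heps.
  set (K' := Rabs K + 1).
  assert (HK' : 0 < K') by (unfold K'; pose proof (Rabs_pos K); lra).
  exists (Rpower (eps / K') (/ d)). split. apply Rpower_pos'.
  intros y y' Hy Hy' Hyy.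
  destruct (Req_dec y y') as [E|E].
  { subst. rewrite Rminus_diag, Rabs_R0; lra. }
  eapply Rle_lt_trans. apply HK; auto.
  assert (Hp: Rpower (Rabs (y - y')) d < eps / K').
  { replace (eps / K') with (Rpower (Rpower (eps / K') (/ d)) d).
    apply Rlt_Rpower_l; auto. split; auto.
    apply Rabs_pos_lt. lra.
    rewrite Rpower_mult, Rinv_l by lra. apply Rpower_1.
    apply Rdiv_lt_0_compat; lra. }
  pose proof (Rpower_pos' (Rabs (y - y')) d).
  apply Rle_lt_trans with (K' * Rpower (Rabs (y - y')) d).
  apply Rmult_le_compat_r. lra. unfold K'. pose proof (Rle_abs K); lra.
  apply Rmult_lt_reg_l with (/ K'). apply Rinv_0_lt_compat; lra.
  rewrite <- Rmult_assoc, Rinv_l by lra. rewrite Rmult_1_l.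
  unfold Rdiv in Hp. rewrite Rmult_comm. lra.
Qed.

Lemma UC_cont : forall a c g, UC a c g -> cont_on a c g.
Proof.
  intros a c g H x Hx eps Heps. destruct (H eps Heps) as [eta [He H']].
  exists eta; split; auto.
Qed.

Definition clamp (a c x : R) := Rmax a (Rmin c x).

Lemma clamp_in : forall a c x, a <= c -> a <= clamp a c x <= c.
Proof. intros; unfold clamp, Rmax, Rmin; repeat destruct Rle_dec; lra. Qed.

Lemma clamp_id : forall a c x, a <= x <= c -> clamp a c x = x.
Proof. intros; unfold clamp, Rmax, Rmin; repeat destruct Rle_dec; lra. Qed.

Lemma clamp_lip : forall a c x y, a <= c -> Rabs (clamp a c y - clamp a c x) <= Rabs (y - x).
Proof.
  intros; unfold clamp, Rmax, Rmin; repeat destruct Rle_dec;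
  unfold Rabs; repeat destruct Rcase_abs; lra.
Qed.

Lemma clamp_cont : forall a c g, a <= c -> cont_on a c g ->
  forall x, continuity_pt (fun y => g (clamp a c y)) x.
Proof.
  intros a c g Hac H x.
  unfold continuity_pt, continue_in, limit1_in, limit_in. simpl. unfold R_dist.
  intros eps Heps.
  destruct (H (clamp a c x) (clamp_in a c x Hac) eps Heps) as [del [Hdel Hd]].
  exists del. split; auto. intros y [_ Hy].
  apply Hd. apply clamp_in; auto.
  eapply Rle_lt_trans. apply clamp_lip; auto. auto.
Qed.

Lemma cont_UC_bnd : forall a c g, a <= c -> cont_on a c g ->
  UC a c g /\ exists M, forall x, a <= x <= c -> Rabs (g x) <= M.
Proof.
  intros a c g Hac H. pose proof (clamp_cont a c g Hac H) as Hc.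
  split.
  - intros eps Heps.
    destruct (@Heine_cor2 (fun y => g (clamp a c y)) a c (fun (x:R) (_ : a <= x <= c) => Hc x) (mkposreal eps Heps)) as [del Hdel].
    exists del. split. apply cond_pos. intros y y' Hy Hy' Hyy.
    specialize (Hdel y y' Hy Hy' Hyy). simpl in Hdel.
    rewrite !clamp_id in Hdel; auto.
  - destruct (continuity_ab_maj _ a c Hac (fun (x:R) (_ : a <= x <= c) => Hc x)) as [M1 [HM1 _]].
    destruct (continuity_ab_min _ a c Hac (fun (x:R) (_ : a <= x <= c) => Hc x)) as [m1 [Hm1 _]].
    exists (Rmax (Rabs (g (clamp a c M1))) (Rabs (g (clamp a c m1)))).
    intros x Hx. specialize (HM1 x Hx). specialize (Hm1 x Hx).
    rewrite (clamp_id a c x Hx) in HM1, Hm1.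
    unfold Rmax; destruct Rle_dec; unfold Rabs in *; repeat destruct Rcase_abs; lra.
Qed.

Lemma part_mono : forall a c N D, is_partition a c N D ->
  forall j k, (j <= k <= N)%nat -> D j <= D k.
Proof.
  intros a c N D [_ [_ [_ H]]] j k [Hjk HkN].
  induction Hjk. lra. assert (D m < D (S m)) by (apply H; lia). specialize (IHHjk ltac:(lia)). lra.
Qed.

Lemma part_range : forall a c N D, is_partition a c N D ->
  forall j, (j <= N)%nat -> a <= D j <= c.
Proof.
  intros a c N D HP j Hj. pose proof HP as [_ [H0 [HN _]]].
  split. rewrite <- H0. apply (part_mono a c N D HP); lia.
  rewrite <- HN. apply (part_mono a c N D HP); lia.
Qed.

Lemma part_gap : forall a c N D, is_partition a c N D ->
  exists lam, 0 < lam /\ forall i, (i < N)%nat -> lam <= D (S i) - D i.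
Proof.
  intros a c N D [_ [_ [_ H]]].
  assert (forall n, exists lam, 0 < lam /\ forall i, (i < n)%nat -> (i < N)%nat -> lam <= D (S i) - D i).
  { induction n.
    - exists 1. split. lra. intros; lia.
    - destruct IHn as [l [Hl Hl']].
      destruct (Compare_dec.lt_dec n N).
      + exists (Rmin l (D (S n) - D n)). split.
        apply Rmin_pos; auto. specialize (H n l0); lra.
        intros i Hi HiN. destruct (Nat.eq_dec i n). subst. apply Rmin_r.
        eapply Rle_trans. apply Rmin_l. apply Hl'; lia.
      + exists l. split; auto. intros i Hi HiN. apply Hl'; lia. }
  destruct (H0 N) as [l [Hl Hl']]. exists l; split; auto.
Qed.

Lemma first_le_spec : forall D x k i, (1 <= i)%nat ->
  D (i - 1)%nat <= x <= D (i + k)%nat ->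
  let j := first_le D x i k in (i <= j <= i + k)%nat /\ D (j - 1)%nat <= x <= D j.
Proof.
  intros D x k. induction k; intros i Hi Hx; simpl.
  - rewrite Nat.add_0_r in Hx. split; auto; lia.
  - destruct (Rle_dec x (D i)).
    + split. lia. lra.
    + assert (H1: (1 <= S i)%nat) by lia.
      assert (H2: D (S i - 1)%nat <= x <= D (S i + k)%nat).
      { replace (S i - 1)%nat with i by lia. replace (S i + k)%nat with (i + S k)%nat by lia. lra. }
      destruct (IHk (S i) H1 H2) as [H3 H4]. split; auto. lia.
Qed.

Lemma seg_spec : forall a c N D x, is_partition a c N D -> a <= x <= c ->
  let i := seg_index N D x in (1 <= i <= N)%nat /\ D (i - 1)%nat <= x <= D i.
Proof.
  intros a c N D x HP Hx. pose proof HP as [HN [H0 [HNc _]]].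
  unfold seg_index.
  assert (Hs : D (1 - 1)%nat <= x <= D (1 + (N - 1))%nat).
  { replace (1 - 1)%nat with 0%nat by lia. replace (1 + (N - 1))%nat with N by lia. lra. }
  destruct (first_le_spec D x (N - 1) 1 (le_n 1) Hs) as [H1 H2]. split; auto. lia.
Qed.

Lemma abs_le_inv : forall z d, Rabs z <= d -> -d <= z <= d.
Proof. intros; unfold Rabs in *; destruct Rcase_abs; lra. Qed.

Lemma abs_le_intro : forall z d, -d <= z <= d -> Rabs z <= d.
Proof. intros; unfold Rabs in *; destruct Rcase_abs; lra. Qed.

Lemma abs_div_le2 : forall z w K mu, 0 < mu -> mu <= w -> Rabs z <= K -> Rabs (z / w) <= K / mu.
Proof.
  intros z w K mu Hmu Hw Hz.
  assert (0 <= K) by (pose proof (Rabs_pos z); lra).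
  unfold Rdiv. rewrite Rabs_mult, Rabs_inv, (Rabs_pos_eq w) by lra.
  apply Rmult_le_compat; auto. apply Rabs_pos. left; apply Rinv_0_lt_compat; lra.
  apply Rinv_le_contravar; lra.
Qed.

Lemma part_ac : forall a c N D, is_partition a c N D -> a < c.
Proof.
  intros a c N D HP. pose proof HP as [HN1 [H0 [HN Hlt]]].
  assert (D 0%nat < D 1%nat) by (apply Hlt; lia).
  assert (D 1%nat <= D N) by (apply (part_mono a c N D HP); lia). lra.
Qed.

Definition close (N : nat) (D D' : nat -> R) (del : R) :=
  forall j, (j <= N)%nat -> Rabs (D j - D' j) <= del.

Lemma Q_in : forall a c N D i x, is_partition a c N D -> (1 <= i <= N)%nat ->
  D (i - 1)%nat <= x <= D i -> a <= Q_map N D i x <= c.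
Proof.
  intros a c N D i x HP Hi Hx. pose proof HP as [_ [H0 [HN Hlt]]].
  assert (Hw : D (i - 1)%nat < D i).
  { replace i with (S (i - 1)) at 2 by lia. apply Hlt; lia. }
  unfold Q_map. rewrite H0, HN.
  assert (a < c) by (apply (part_ac a c N D HP)).
  set (w := D i - D (i - 1)%nat) in *.
  assert (0 <= (c - a) / w * (x - D (i - 1)%nat) <= c - a).
  { replace ((c - a) / w * (x - D (i - 1)%nat)) with ((c - a) * ((x - D (i - 1)%nat) / w)) by (field; unfold w; lra).
    assert (0 <= (x - D (i - 1)%nat) / w <= 1).
    { split. unfold Rdiv; apply Rmult_le_pos. unfold w in *; lra. left; apply Rinv_0_lt_compat; unfold w; lra.
      apply Rmult_le_reg_r with w. unfold w; lra. unfold Rdiv. rewrite Rmult_assoc, Rinv_l by (unfold w; lra). unfold w; lra. }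
    split; nra. }
  lra.
Qed.

Lemma geo_eq : forall a c N D D' i x x' del mu, is_partition a c N D -> is_partition a c N D' ->
  (1 <= i <= N)%nat -> 0 < mu -> mu <= D' i - D' (i - 1)%nat ->
  D (i - 1)%nat <= x <= D i -> close N D D' del -> Rabs (x - x') <= del ->
  Rabs (Q_map N D i x - Q_map N D' i x') <= 3 * (c - a) * del / mu.
Proof.
  intros a c N D D' i x x' del mu HP HP' Hi Hmu Hmu' Hx Hcl Hxx.
  pose proof HP as [_ [H0 [HN Hlt]]]. pose proof HP' as [_ [H0' [HN' _]]].
  assert (Hw : D (i - 1)%nat < D i).
  { replace i with (S (i - 1)) at 2 by lia. apply Hlt; lia. }
  assert (Hac : a < c) by (apply (part_ac a c N D HP)).
  unfold Q_map. rewrite H0, HN, H0', HN'.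
  set (u := D (i - 1)%nat) in *. set (v := D i) in *.
  set (u' := D' (i - 1)%nat) in *. set (v' := D' i) in *.
  assert (Hu := abs_le_inv _ _ (Hcl (i - 1)%nat ltac:(lia))).
  assert (Hv := abs_le_inv _ _ (Hcl i ltac:(lia))).
  fold u u' v v' in Hu, Hv.
  apply abs_le_inv in Hxx.
  replace ((c - a) / (v - u) * (x - u) + a - ((c - a) / (v' - u') * (x' - u') + a))
    with (((c - a) * (((x - u) * (v' - v) + (x - v) * (u - u')) + (x - x') * (v - u)) / (v - u)) / (v' - u'))
    by (field; lra).
  apply abs_div_le2; auto.
  replace (3 * (c - a) * del) with ((3 * (c - a) * del * (v - u)) / (v - u)) by (field; lra).
  apply abs_div_le2; try lra.
  rewrite Rabs_mult, (Rabs_pos_eq (c - a)) by lra.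
  replace (3 * (c - a) * del * (v - u)) with ((c - a) * (3 * del * (v - u))) by ring.
  apply Rmult_le_compat_l. lra.
  apply abs_le_intro. split; nra.
Qed.

Lemma geo_lt : forall a c N D D' i i' x x' del mu, is_partition a c N D -> is_partition a c N D' ->
  (1 <= i)%nat -> (i < i')%nat -> (i' <= N)%nat -> 0 < mu ->
  mu <= D i - D (i - 1)%nat -> mu <= D' i' - D' (i' - 1)%nat ->
  D (i - 1)%nat <= x <= D i -> D' (i' - 1)%nat <= x' <= D' i' ->
  close N D D' del -> Rabs (x - x') <= del ->
  Rabs (c - Q_map N D i x) <= 2 * (c - a) * del / mu /\
  Rabs (Q_map N D' i' x' - a) <= 2 * (c - a) * del / mu.
Proof.
  intros a c N D D' i i' x x' del mu HP HP' Hi Hii HiN Hmu Hm1 Hm2 Hx Hx' Hcl Hxx.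
  pose proof HP as [_ [H0 [HN Hlt]]]. pose proof HP' as [_ [H0' [HN' _]]].
  assert (Hac : a < c) by (apply (part_ac a c N D HP)).
  assert (M1 : D' i <= D' (i' - 1)%nat) by (apply (part_mono a c N D' HP'); lia).
  assert (M2 : D i <= D (i' - 1)%nat) by (apply (part_mono a c N D HP); lia).
  assert (Hu := abs_le_inv _ _ (Hcl (i' - 1)%nat ltac:(lia))).
  assert (Hv := abs_le_inv _ _ (Hcl i ltac:(lia))).
  apply abs_le_inv in Hxx.
  unfold Q_map. rewrite H0, HN, H0', HN'.
  split.
  - replace (c - ((c - a) / (D i - D (i - 1)%nat) * (x - D (i - 1)%nat) + a))
      with (((c - a) * (D i - x)) / (D i - D (i - 1)%nat)) by (field; lra).
    apply abs_div_le2; auto. apply abs_le_intro. split; nra.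
  - replace ((c - a) / (D' i' - D' (i' - 1)%nat) * (x' - D' (i' - 1)%nat) + a - a)
      with (((c - a) * (x' - D' (i' - 1)%nat)) / (D' i' - D' (i' - 1)%nat)) by (field; lra).
    apply abs_div_le2; auto. apply abs_le_intro. split; nra.
Qed.

Definition GPhi (N : nat) (D : nat -> R) (Phi : nat -> R -> R) (x : R) : R :=
  Phi (seg_index N D x) (Q_map N D (seg_index N D x) x).

Definition equiUC (a c : R) (N : nat) (Phi : nat -> R -> R) :=
  forall eps, 0 < eps -> exists eta, 0 < eta /\ forall i, (1 <= i <= N)%nat ->
    forall y y', a <= y <= c -> a <= y' <= c -> Rabs (y - y') < eta -> Rabs (Phi i y - Phi i y') < eps.

Lemma family_UC : forall a c (P : nat -> R -> R) n, (forall i, (1 <= i <= n)%nat -> UC a c (P i)) ->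
  equiUC a c n P.
Proof.
  intros a c P n. induction n; intros H eps Heps.
  - exists 1. split. lra. intros; lia.
  - destruct (IHn (fun i Hi => H i ltac:(lia)) eps Heps) as [e1 [He1 H1]].
    destruct (H (S n) ltac:(lia) eps Heps) as [e2 [He2 H2]].
    exists (Rmin e1 e2). split. apply Rmin_pos; auto.
    intros i Hi y y' Hy Hy' Hyy.
    destruct (Nat.eq_dec i (S n)).
    + subst. apply H2; auto. apply Rlt_le_trans with (Rmin e1 e2); [exact Hyy | apply Rmin_r].
    + apply H1; auto. lia. apply Rlt_le_trans with (Rmin e1 e2); [exact Hyy | apply Rmin_l].
Qed.

Lemma prod_equiUC : forall a c N (A : nat -> R -> R) (H : R -> R) MH,
  equiUC a c N A -> (forall i y, (1 <= i <= N)%nat -> a <= y <= c -> Rabs (A i y) <= 1) ->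
  UC a c H -> (forall y, a <= y <= c -> Rabs (H y) <= MH) ->
  equiUC a c N (fun i y => A i y * H y).
Proof.
  intros a c N A H MH HA HA1 HH HM eps Heps.
  set (M := Rabs MH + 1).
  assert (HMp : 0 < M) by (unfold M; pose proof (Rabs_pos MH); lra).
  destruct (HA (eps / 2 / M)) as [e1 [He1 H1]]. apply Rdiv_lt_0_compat; lra.
  destruct (HH (eps / 2)) as [e2 [He2 H2]]. lra.
  exists (Rmin e1 e2). split. apply Rmin_pos; auto.
  intros i Hi y y' Hy Hy' Hyy.
  assert (Hy1 : Rabs (y - y') < e1) by (apply Rlt_le_trans with (Rmin e1 e2); [exact Hyy | apply Rmin_l]).
  assert (Hy2 : Rabs (y - y') < e2) by (apply Rlt_le_trans with (Rmin e1 e2); [exact Hyy | apply Rmin_r]).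
  specialize (H1 i Hi y y' Hy Hy' Hy1). specialize (H2 y y' Hy Hy' Hy2).
  replace (A i y * H y - A i y' * H y') with (A i y * (H y - H y') + (A i y - A i y') * H y') by ring.
  eapply Rle_lt_trans. apply Rabs_triang. rewrite !Rabs_mult.
  assert (E1: Rabs (A i y) <= 1) by auto.
  assert (E2: Rabs (H y') <= M) by (unfold M; pose proof (HM y' Hy'); pose proof (Rle_abs MH); lra).
  assert (E3: Rabs (A i y) * Rabs (H y - H y') <= Rabs (H y - H y')).
  { pose proof (Rabs_pos (H y - H y')). nra. }
  assert (E4: Rabs (A i y - A i y') * Rabs (H y') <= eps / 2 / M * M).
  { apply Rmult_le_compat; try apply Rabs_pos; lra. }
  replace (eps / 2 / M * M) with (eps / 2) in E4 by (field; lra).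
  lra.
Qed.

Lemma gap_i : forall a c N D lam, is_partition a c N D ->
  (forall i, (i < N)%nat -> lam <= D (S i) - D i) ->
  forall i, (1 <= i <= N)%nat -> lam <= D i - D (i - 1)%nat.
Proof.
  intros. replace i with (S (i - 1)) at 1 by lia. apply H0; lia.
Qed.

Lemma abs_sub_le : forall p q, Rabs (p - q) <= Rabs p + Rabs q.
Proof. intros; unfold Rminus; rewrite <- (Rabs_Ropp q); apply Rabs_triang. Qed.

Lemma GL : forall a c N D (Phi : nat -> R -> R), is_partition a c N D ->
  equiUC a c N Phi -> (forall i, (1 <= i <= N)%nat -> Phi i a = 0 /\ Phi i c = 0) ->
  forall eps, 0 < eps -> exists del, 0 < del /\ forall D', is_partition a c N D' ->
    close N D D' del -> forall x x', a <= x <= c -> a <= x' <= c -> Rabs (x - x') <= del ->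
    Rabs (GPhi N D Phi x - GPhi N D' Phi x') < eps.
Proof.
  intros a c N D Phi HP HU H0 eps Heps.
  destruct (part_gap a c N D HP) as [lam [Hlam Hgap]].
  assert (Hac := part_ac a c N D HP).
  destruct (HU (eps / 2)) as [eta [Heta Hphi]]. lra.
  set (mu := lam / 2).
  set (del := Rmin (lam / 4) (eta * mu / (4 * (c - a)))).
  assert (Hdp : 0 < del).
  { apply Rmin_pos. lra. unfold mu. apply Rdiv_lt_0_compat; try lra. apply Rmult_lt_0_compat; lra. }
  assert (Hd1 : del <= lam / 4) by apply Rmin_l.
  assert (Hd2 : del <= eta * mu / (4 * (c - a))) by apply Rmin_r.
  assert (Hmu : 0 < mu) by (unfold mu; lra).
  assert (K3 : 3 * (c - a) * del / mu < eta).
  { apply Rmult_le_compat_l with (r := 3 * (c - a)) in Hd2; [|lra].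
    replace (3 * (c - a) * (eta * mu / (4 * (c - a)))) with (3 / 4 * eta * mu) in Hd2 by (field; lra).
    apply Rmult_lt_reg_r with mu; auto. unfold Rdiv. rewrite Rmult_assoc, Rinv_l by lra. nra. }
  assert (K2 : 2 * (c - a) * del / mu < eta).
  { eapply Rle_lt_trans; [|apply K3]. unfold Rdiv. apply Rmult_le_compat_r. left; apply Rinv_0_lt_compat; lra.
    apply Rmult_le_compat_r; lra. }
  exists del. split; auto.
  intros D' HP' Hcl x x' Hx Hx' Hxx.
  assert (Hgap' : forall i, (1 <= i <= N)%nat -> mu <= D' i - D' (i - 1)%nat).
  { intros i Hi. pose proof (gap_i a c N D lam HP Hgap i Hi).
    pose proof (abs_le_inv _ _ (Hcl i ltac:(lia))). pose proof (abs_le_inv _ _ (Hcl (i - 1)%nat ltac:(lia))).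
    unfold mu; lra. }
  assert (HgapD : forall i, (1 <= i <= N)%nat -> mu <= D i - D (i - 1)%nat).
  { intros i Hi. pose proof (gap_i a c N D lam HP Hgap i Hi). unfold mu; lra. }
  assert (Hcl' : close N D' D del).
  { intros j Hj. rewrite Rabs_minus_sym. auto. }
  assert (Hxx' : Rabs (x' - x) <= del) by (rewrite Rabs_minus_sym; auto).
  destruct (seg_spec a c N D x HP Hx) as [Hi Hix].
  destruct (seg_spec a c N D' x' HP' Hx') as [Hi' Hix'].
  unfold GPhi.
  set (i := seg_index N D x) in *. set (i' := seg_index N D' x') in *.
  pose proof (Q_in a c N D i x HP Hi Hix) as Hq.
  pose proof (Q_in a c N D' i' x' HP' Hi' Hix') as Hq'.
  assert (Ha : a <= a <= c) by lra. assert (Hc : a <= c <= c) by lra.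
  destruct (Compare_dec.lt_eq_lt_dec i i') as [[Hlt|Heq]|Hgt].
  - destruct (geo_lt a c N D D' i i' x x' del mu HP HP' ltac:(lia) Hlt ltac:(lia) Hmu
      (HgapD i Hi) (Hgap' i' Hi') Hix Hix' Hcl Hxx) as [A1 A2].
    assert (B1 : Rabs (Phi i c - Phi i (Q_map N D i x)) < eps / 2) by (apply Hphi; auto; lra).
    assert (B2 : Rabs (Phi i' (Q_map N D' i' x') - Phi i' a) < eps / 2) by (apply Hphi; auto; lra).
    destruct (H0 i Hi) as [_ Z1]. destruct (H0 i' Hi') as [Z2 _].
    rewrite Z1, Rminus_0_l, Rabs_Ropp in B1. rewrite Z2, Rminus_0_r in B2.
    eapply Rle_lt_trans. apply abs_sub_le. lra.
  - rewrite <- Heq in *.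
    pose proof (geo_eq a c N D D' i x x' del mu HP HP' Hi Hmu (Hgap' i Hi) Hix Hcl Hxx).
    assert (Rabs (Phi i (Q_map N D i x) - Phi i (Q_map N D' i x')) < eps / 2) by (apply Hphi; auto; lra).
    lra.
  - destruct (geo_lt a c N D' D i' i x' x del mu HP' HP ltac:(lia) Hgt ltac:(lia) Hmu
      (Hgap' i' Hi') (HgapD i Hi) Hix' Hix Hcl' Hxx') as [A1 A2].
    assert (B1 : Rabs (Phi i' c - Phi i' (Q_map N D' i' x')) < eps / 2) by (apply Hphi; auto; lra).
    assert (B2 : Rabs (Phi i (Q_map N D i x) - Phi i a) < eps / 2) by (apply Hphi; auto; lra).
    destruct (H0 i' Hi') as [_ Z1]. destruct (H0 i Hi) as [Z2 _].
    rewrite Z1, Rminus_0_l, Rabs_Ropp in B1. rewrite Z2, Rminus_0_r in B2.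
    eapply Rle_lt_trans. apply abs_sub_le. lra.
Qed.

Definition Hyp a c N (f : R -> R) (b : nat -> R -> R) (alpha : nat -> nat -> R -> R) s B :=
  a < c /\ 0 <= s < 1 /\ UC a c f /\
  (forall r, (1 <= r)%nat -> UC a c (b r) /\ b r a = f a /\ b r c = f c /\
     forall y, a <= y <= c -> Rabs (b r y) <= B) /\
  (forall i r, (1 <= i <= N)%nat -> (1 <= r)%nat -> UC a c (alpha i r) /\
     forall y, a <= y <= c -> Rabs (alpha i r y) <= s).

Definition Cf a c (f h : R -> R) := UC a c h /\ h a = f a /\ h c = f c.

Definition PhiR (alpha : nat -> nat -> R -> R) (b : nat -> R -> R) r (h : R -> R) :=
  fun i y => alpha i r y * (h y - b r y).

Lemma T_eq : forall N D f b alpha r h x,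
  T_op N D f b alpha r h x = f x + GPhi N D (PhiR alpha b r h) x.
Proof. reflexivity. Qed.

Lemma Q_at_a : forall a c N D, is_partition a c N D -> Q_map N D (seg_index N D a) a = a.
Proof.
  intros a c N D HP. assert (Hac := part_ac a c N D HP).
  destruct (seg_spec a c N D a HP ltac:(lra)) as [Hi Hx].
  pose proof (part_range a c N D HP (seg_index N D a - 1)%nat ltac:(lia)).
  unfold Q_map. replace (D (seg_index N D a - 1)%nat) with a by lra. 
  rewrite Rminus_diag, Rmult_0_r. destruct HP as [_ [H0 _]]. rewrite H0; ring.
Qed.

Lemma Q_at_c : forall a c N D, is_partition a c N D -> Q_map N D (seg_index N D c) c = c.
Proof.
  intros a c N D HP. assert (Hac := part_ac a c N D HP).
  destruct (seg_spec a c N D c HP ltac:(lra)) as [Hi Hx].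
  pose proof (part_range a c N D HP (seg_index N D c)%nat ltac:(lia)).
  pose proof HP as [_ [H0 [HN Hlt]]].
  assert (Hw : D (seg_index N D c - 1)%nat < D (seg_index N D c)).
  { replace (seg_index N D c) with (S (seg_index N D c - 1)) at 2 by lia. apply Hlt; lia. }
  unfold Q_map. rewrite H0, HN.
  replace (D (seg_index N D c)) with c in * by lra. field. lra.
Qed.

Lemma T_UC : forall a c N D f b alpha s B r h, Hyp a c N f b alpha s B ->
  is_partition a c N D -> (1 <= r)%nat -> Cf a c f h -> Cf a c f (T_op N D f b alpha r h).
Proof.
  intros a c N D f b alpha s B r h [Hac [Hs [Hf [Hb Hal]]]] HP Hr [Hh [Ha Hc]].
  destruct (Hb r Hr) as [Hbr [Hba [Hbc HbB]]].
  destruct (cont_UC_bnd a c h ltac:(lra) (UC_cont a c h Hh)) as [_ [Mh HMh]].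
  assert (HE : equiUC a c N (PhiR alpha b r h)).
  { unfold PhiR. apply prod_equiUC with (MH := Mh + B).
    - apply family_UC. intros i Hi. apply (Hal i r Hi Hr).
    - intros i y Hi Hy. pose proof (proj2 (Hal i r Hi Hr) y Hy). lra.
    - intros eps Heps. destruct (Hh (eps/2)) as [e1 [He1 H1]]. lra.
      destruct (Hbr (eps/2)) as [e2 [He2 H2]]. lra.
      exists (Rmin e1 e2). split. apply Rmin_pos; auto. intros y y' Hy Hy' Hyy.
      assert (Rabs (y - y') < e1) by (apply Rlt_le_trans with (Rmin e1 e2); [exact Hyy | apply Rmin_l]).
      assert (Rabs (y - y') < e2) by (apply Rlt_le_trans with (Rmin e1 e2); [exact Hyy | apply Rmin_r]).
      specialize (H1 y y' Hy Hy' H). specialize (H2 y y' Hy Hy' H0).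
      replace (h y - b r y - (h y' - b r y')) with ((h y - h y') - (b r y - b r y')) by ring.
      eapply Rle_lt_trans. apply abs_sub_le. lra.
    - intros y Hy. eapply Rle_trans. apply abs_sub_le. pose proof (HMh y Hy); pose proof (HbB y Hy); lra. }
  assert (HZ : forall i, (1 <= i <= N)%nat -> PhiR alpha b r h i a = 0 /\ PhiR alpha b r h i c = 0).
  { intros i Hi. unfold PhiR. rewrite Ha, Hba, Hc, Hbc, !Rminus_diag, !Rmult_0_r. auto. }
  split; [|split].
  - intros eps Heps.
    destruct (GL a c N D _ HP HE HZ (eps/2)) as [del [Hdel HG]]. lra.
    destruct (Hf (eps/2)) as [e1 [He1 H1]]. lra.
    exists (Rmin e1 del). split. apply Rmin_pos; auto. intros y y' Hy Hy' Hyy.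
    assert (Rabs (y - y') < e1) by (apply Rlt_le_trans with (Rmin e1 del); [exact Hyy | apply Rmin_l]).
    assert (Rabs (y - y') <= del) by (left; apply Rlt_le_trans with (Rmin e1 del); [exact Hyy | apply Rmin_r]).
    rewrite !T_eq.
    assert (Hcl : close N D D 0) by (intros j _; rewrite Rminus_diag, Rabs_R0; lra).
    specialize (HG D HP (fun j Hj => Rle_trans _ _ _ (Hcl j Hj) (Rlt_le _ _ Hdel)) y y' Hy Hy' H0).
    specialize (H1 y y' Hy Hy' H).
    replace (f y + GPhi N D (PhiR alpha b r h) y - (f y' + GPhi N D (PhiR alpha b r h) y'))
      with ((f y - f y') - - (GPhi N D (PhiR alpha b r h) y - GPhi N D (PhiR alpha b r h) y')) by ring.
    eapply Rle_lt_trans. apply abs_sub_le. rewrite Rabs_Ropp. lra.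
  - rewrite T_eq. unfold GPhi. rewrite (Q_at_a a c N D HP).
    destruct (HZ (seg_index N D a)) as [Z _]. apply (seg_spec a c N D a HP); lra.
    rewrite Z; ring.
  - rewrite T_eq. unfold GPhi. rewrite (Q_at_c a c N D HP).
    destruct (HZ (seg_index N D c)) as [_ Z]. apply (seg_spec a c N D c HP); lra.
    rewrite Z; ring.
Qed.

Lemma Phi_facts : forall a c N f b alpha s B r h, Hyp a c N f b alpha s B ->
  (1 <= r)%nat -> Cf a c f h ->
  equiUC a c N (PhiR alpha b r h) /\
  (forall i, (1 <= i <= N)%nat -> PhiR alpha b r h i a = 0 /\ PhiR alpha b r h i c = 0).
Proof.
  intros a c N f b alpha s B r h [Hac [Hs [Hf [Hb Hal]]]] Hr [Hh [Ha Hc]].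
  destruct (Hb r Hr) as [Hbr [Hba [Hbc HbB]]].
  destruct (cont_UC_bnd a c h ltac:(lra) (UC_cont a c h Hh)) as [_ [Mh HMh]].
  split.
  { unfold PhiR. apply prod_equiUC with (MH := Mh + B).
    - apply family_UC. intros i Hi. apply (Hal i r Hi Hr).
    - intros i y Hi Hy. pose proof (proj2 (Hal i r Hi Hr) y Hy). lra.
    - intros eps Heps. destruct (Hh (eps/2)) as [e1 [He1 H1]]. lra.
      destruct (Hbr (eps/2)) as [e2 [He2 H2]]. lra.
      exists (Rmin e1 e2). split. apply Rmin_pos; auto. intros y y' Hy Hy' Hyy.
      assert (Rabs (y - y') < e1) by (apply Rlt_le_trans with (Rmin e1 e2); [exact Hyy | apply Rmin_l]).
      assert (Rabs (y - y') < e2) by (apply Rlt_le_trans with (Rmin e1 e2); [exact Hyy | apply Rmin_r]).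
      specialize (H1 y y' Hy Hy' H). specialize (H2 y y' Hy Hy' H0).
      replace (h y - b r y - (h y' - b r y')) with ((h y - h y') - (b r y - b r y')) by ring.
      eapply Rle_lt_trans. apply abs_sub_le. lra.
    - intros y Hy. eapply Rle_trans. apply abs_sub_le. pose proof (HMh y Hy); pose proof (HbB y Hy); lra. }
  { intros i Hi. unfold PhiR. rewrite Ha, Hba, Hc, Hbc, !Rminus_diag, !Rmult_0_r. auto. }
Qed.

Lemma T_diff : forall a c N D f b alpha s B r g h x, Hyp a c N f b alpha s B ->
  is_partition a c N D -> (1 <= r)%nat -> a <= x <= c ->
  exists y, a <= y <= c /\
  Rabs (T_op N D f b alpha r g x - T_op N D f b alpha r h x) <= s * Rabs (g y - h y).
Proof.
  intros a c N D f b alpha s B r g h x HH HP Hr Hx.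
  destruct HH as [Hac [Hs [Hf [Hb Hal]]]].
  destruct (seg_spec a c N D x HP Hx) as [Hi Hix].
  pose proof (Q_in a c N D _ x HP Hi Hix) as Hq.
  exists (Q_map N D (seg_index N D x) x). split; auto.
  rewrite !T_eq. unfold GPhi, PhiR.
  set (i := seg_index N D x) in *. set (q := Q_map N D i x) in *.
  replace (f x + alpha i r q * (g q - b r q) - (f x + alpha i r q * (h q - b r q)))
    with (alpha i r q * (g q - h q)) by ring.
  rewrite Rabs_mult. apply Rmult_le_compat_r. apply Rabs_pos.
  apply (Hal i r Hi Hr); auto.
Qed.

Lemma T_contr : forall a c N D f b alpha s B r g h m, Hyp a c N f b alpha s B ->
  is_partition a c N D -> (1 <= r)%nat ->
  (forall y, a <= y <= c -> Rabs (g y - h y) <= m) ->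
  forall x, a <= x <= c -> Rabs (T_op N D f b alpha r g x - T_op N D f b alpha r h x) <= s * m.
Proof.
  intros a c N D f b alpha s B r g h m HH HP Hr Hm x Hx.
  destruct (T_diff a c N D f b alpha s B r g h x HH HP Hr Hx) as [y [Hy Hd]].
  pose proof HH as [_ [Hs _]].
  eapply Rle_trans. apply Hd. apply Rmult_le_compat_l. lra. auto.
Qed.

Lemma T_strict : forall a c N D f b alpha s B r g h m, Hyp a c N f b alpha s B ->
  is_partition a c N D -> (1 <= r)%nat ->
  (forall y, a <= y <= c -> Rabs (g y - h y) < m) ->
  forall x, a <= x <= c -> Rabs (T_op N D f b alpha r g x - T_op N D f b alpha r h x) < m.
Proof.
  intros a c N D f b alpha s B r g h m HH HP Hr Hm x Hx.
  destruct (T_diff a c N D f b alpha s B r g h x HH HP Hr Hx) as [y [Hy Hd]].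
  pose proof HH as [_ [Hs _]]. specialize (Hm y Hy). pose proof (Rabs_pos (g y - h y)).
  assert (s * Rabs (g y - h y) <= Rabs (g y - h y)) by nra. lra.
Qed.

Lemma T_bnd : forall a c N D f b alpha s B r h F K, Hyp a c N f b alpha s B ->
  is_partition a c N D -> (1 <= r)%nat ->
  (forall y, a <= y <= c -> Rabs (f y) <= F) ->
  (forall y, a <= y <= c -> Rabs (h y) <= K) ->
  forall x, a <= x <= c -> Rabs (T_op N D f b alpha r h x) <= F + s * (K + B).
Proof.
  intros a c N D f b alpha s B r h F K HH HP Hr HF HK x Hx.
  destruct HH as [Hac [Hs [Hf [Hb Hal]]]].
  destruct (seg_spec a c N D x HP Hx) as [Hi Hix].
  pose proof (Q_in a c N D _ x HP Hi Hix) as Hq.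
  rewrite T_eq. unfold GPhi, PhiR.
  set (i := seg_index N D x) in *. set (q := Q_map N D i x) in *.
  eapply Rle_trans. apply Rabs_triang. rewrite Rabs_mult.
  pose proof (HF x Hx). pose proof (proj2 (Hal i r Hi Hr) q Hq).
  assert (Rabs (h q - b r q) <= K + B).
  { eapply Rle_trans. apply abs_sub_le. pose proof (HK q Hq). pose proof (proj2 (proj2 (proj2 (Hb r Hr))) q Hq). lra. }
  pose proof (Rabs_pos (alpha i r q)). pose proof (Rabs_pos (h q - b r q)).
  assert (Rabs (alpha i r q) * Rabs (h q - b r q) <= s * (K + B)) by (apply Rmult_le_compat; auto).
  lra.
Qed.

Lemma iterT_add : forall N D f b alpha n m k g,
  iterT N D f b alpha k (n + m) g = iterT N D f b alpha k n (iterT N D f b alpha (k + n) m g).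
Proof.
  induction n; intros m k g.
  - simpl. rewrite Nat.add_0_r. try reflexivity.
  - simpl. rewrite IHn. replace (S k + n)%nat with (k + S n)%nat by lia. reflexivity.
Qed.

Lemma iter_bnd : forall a c N D f b alpha s B F K, Hyp a c N f b alpha s B ->
  is_partition a c N D ->
  (forall y, a <= y <= c -> Rabs (f y) <= F) -> F + s * (K + B) <= K ->
  forall n k g, (1 <= k)%nat -> (forall y, a <= y <= c -> Rabs (g y) <= K) ->
  forall x, a <= x <= c -> Rabs (iterT N D f b alpha k n g x) <= K.
Proof.
  intros a c N D f b alpha s B F K HH HP HF HK n. induction n; intros k g Hk Hg x Hx.
  - simpl. auto.
  - simpl. eapply Rle_trans; [|apply HK]. apply (T_bnd a c N D f b alpha s B k _ F K HH HP Hk HF); auto.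
Qed.

Lemma iter_contr : forall a c N D f b alpha s B, Hyp a c N f b alpha s B ->
  is_partition a c N D ->
  forall n k g h m, (1 <= k)%nat -> (forall y, a <= y <= c -> Rabs (g y - h y) <= m) ->
  forall x, a <= x <= c ->
  Rabs (iterT N D f b alpha k n g x - iterT N D f b alpha k n h x) <= s ^ n * m.
Proof.
  intros a c N D f b alpha s B HH HP n. induction n; intros k g h m Hk Hm x Hx.
  - simpl. rewrite Rmult_1_l. auto.
  - simpl. replace (s * s ^ n * m) with (s * (s ^ n * m)) by ring.
    apply (T_contr a c N D f b alpha s B k _ _ _ HH HP Hk); auto.
Qed.

Lemma iter_Cf : forall a c N D f b alpha s B, Hyp a c N f b alpha s B ->
  is_partition a c N D ->
  forall n k g, (1 <= k)%nat -> Cf a c f g -> Cf a c f (iterT N D f b alpha k n g).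
Proof.
  intros a c N D f b alpha s B HH HP n. induction n; intros k g Hk Hg.
  - simpl. auto.
  - simpl. apply (T_UC a c N D f b alpha s B k _ HH HP Hk). apply IHn; auto.
Qed.

Lemma le_eps : forall z w, (forall e, 0 < e -> z <= w + e) -> z <= w.
Proof.
  intros z w H. destruct (Rle_dec z w); auto.
  specialize (H ((z - w) / 2) ltac:(lra)). lra.
Qed.

Lemma small_pow : forall s C eps, 0 <= s < 1 -> 0 <= C -> 0 < eps ->
  exists N0, forall n, (N0 <= n)%nat -> s ^ n * C < eps.
Proof.
  intros s C eps Hs HC He.
  destruct (pow_lt_1_zero s ltac:(rewrite Rabs_pos_eq; lra) (eps / (C + 1))) as [N0 HN0].
  apply Rdiv_lt_0_compat; lra.
  exists N0. intros n Hn. specialize (HN0 n Hn).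
  rewrite Rabs_pos_eq in HN0 by (apply pow_le; lra).
  assert (s ^ n * (C + 1) < eps).
  { apply Rmult_lt_reg_r with (/ (C + 1)). apply Rinv_0_lt_compat; lra.
    rewrite Rmult_assoc, Rinv_r by lra. rewrite Rmult_1_r. exact HN0. }
  pose proof (pow_le s n (proj1 Hs)). nra.
Qed.

Definition Kok a c (f : R -> R) s B F K :=
  (forall y, a <= y <= c -> Rabs (f y) <= F) /\ F + s * (K + B) <= K /\ F <= K.

Lemma cauchy_bound : forall a c N D f b alpha s B F K, Hyp a c N f b alpha s B ->
  is_partition a c N D -> Kok a c f s B F K ->
  forall n m x, a <= x <= c ->
  Rabs (iterT N D f b alpha 1 n f x - iterT N D f b alpha 1 (n + m) f x) <= s ^ n * (2 * K).
Proof.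
  intros a c N D f b alpha s B F K HH HP [HF [HK1 HK2]] n m x Hx.
  rewrite iterT_add.
  apply (iter_contr a c N D f b alpha s B HH HP n 1 _ _ (2 * K)); auto.
  intros y Hy. eapply Rle_trans. apply abs_sub_le.
  pose proof (HF y Hy).
  assert (Rabs (iterT N D f b alpha (1 + n) m f y) <= K).
  { apply (iter_bnd a c N D f b alpha s B F K HH HP HF HK1 m (1 + n) f); auto. lia.
    intros z Hz. pose proof (HF z Hz). lra. }
  lra.
Qed.

Lemma ns_bound_of : forall a c N D f b alpha s B F K psi, Hyp a c N f b alpha s B ->
  is_partition a c N D -> Kok a c f s B F K ->
  is_ns_fractal N D f b alpha psi ->
  forall n x, a <= x <= c -> Rabs (iterT N D f b alpha 1 n f x - psi x) <= s ^ n * (2 * K).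
Proof.
  intros a c N D f b alpha s B F K psi HH HP HKo Hpsi n x Hx.
  pose proof HP as [_ [H0 [HN _]]].
  unfold is_ns_fractal in Hpsi. cbv zeta in Hpsi. rewrite H0, HN in Hpsi.
  pose proof HH as [Hac [Hs [Hf _]]].
  apply le_eps. intros e He.
  destruct (Hpsi f (UC_cont a c f Hf) eq_refl eq_refl e He) as [M HM].
  specialize (HM (n + M)%nat ltac:(lia) x Hx).
  pose proof (cauchy_bound a c N D f b alpha s B F K HH HP HKo n M x Hx).
  replace (iterT N D f b alpha 1 n f x - psi x) with
    ((iterT N D f b alpha 1 n f x - iterT N D f b alpha 1 (n + M) f x) - - (iterT N D f b alpha 1 (n + M) f x - psi x)) by ring.
  eapply Rle_trans. apply abs_sub_le. rewrite Rabs_Ropp. lra.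
Qed.

Lemma ns_of_bound : forall a c N D f b alpha s B F K psi, Hyp a c N f b alpha s B ->
  is_partition a c N D -> Kok a c f s B F K ->
  (forall n x, a <= x <= c -> Rabs (iterT N D f b alpha 1 n f x - psi x) <= s ^ n * (2 * K)) ->
  is_ns_fractal N D f b alpha psi.
Proof.
  intros a c N D f b alpha s B F K psi HH HP [HF [HK1 HK2]] Hb.
  pose proof HP as [_ [H0 [HN _]]].
  unfold is_ns_fractal. cbv zeta. rewrite H0, HN.
  pose proof HH as [Hac [Hs [Hf _]]].
  intros g Hg Ha Hc eps Heps.
  destruct (cont_UC_bnd a c g ltac:(lra) Hg) as [_ [Mg HMg]].
  assert (HMg0 : 0 <= Mg) by (pose proof (HMg a ltac:(lra)); pose proof (Rabs_pos (g a)); lra).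
  assert (HF0 : 0 <= F) by (pose proof (HF a ltac:(lra)); pose proof (Rabs_pos (f a)); lra).
  destruct (small_pow s (Mg + F + 2 * K) eps Hs ltac:(lra) Heps) as [M HM].
  exists M. intros r Hr x Hx.
  pose proof (iter_contr a c N D f b alpha s B HH HP r 1 g f (Mg + F) (le_n 1)) as Hc1.
  assert (Hgf : forall y, a <= y <= c -> Rabs (g y - f y) <= Mg + F).
  { intros y Hy. eapply Rle_trans. apply abs_sub_le. pose proof (HMg y Hy); pose proof (HF y Hy); lra. }
  specialize (Hc1 Hgf x Hx). specialize (Hb r x Hx). specialize (HM r Hr).
  replace (iterT N D f b alpha 1 r g x - psi x) with
    ((iterT N D f b alpha 1 r g x - iterT N D f b alpha 1 r f x) - - (iterT N D f b alpha 1 r f x - psi x)) by ring.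
  eapply Rle_lt_trans. apply abs_sub_le. rewrite Rabs_Ropp.
  replace (s ^ r * (Mg + F + 2 * K)) with (s ^ r * (Mg + F) + s ^ r * (2 * K)) in HM by ring.
  lra.
Qed.

Lemma ns_exists : forall a c N D f b alpha s B F K, Hyp a c N f b alpha s B ->
  is_partition a c N D -> Kok a c f s B F K ->
  exists psi, is_ns_fractal N D f b alpha psi.
Proof.
  intros a c N D f b alpha s B F K HH HP HKo.
  pose proof HKo as [HF [HK1 HK2]]. pose proof HH as [Hac [Hs _]].
  assert (HF0 : 0 <= F) by (pose proof (HF a ltac:(lra)); pose proof (Rabs_pos (f a)); lra).
  set (U := fun x n => iterT N D f b alpha 1 n f x).
  set (psi := fun x => epsilon (inhabits 0) (fun l => Un_cv (U x) l)).
  assert (Hcv : forall x, a <= x <= c -> Un_cv (U x) (psi x)).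
  { intros x Hx. unfold psi. apply epsilon_spec.
    assert (Cauchy_crit (U x)).
    { intros e He. destruct (small_pow s (2 * K) e Hs ltac:(lra) He) as [M HM].
      exists M. intros n m Hn Hm. unfold R_dist, U.
      destruct (Nat.le_ge_cases n m).
      - replace m with (n + (m - n))%nat by lia.
        eapply Rle_lt_trans. apply (cauchy_bound a c N D f b alpha s B F K); auto. apply HM; lia.
      - rewrite Rabs_minus_sym. replace n with (m + (n - m))%nat by lia.
        eapply Rle_lt_trans. apply (cauchy_bound a c N D f b alpha s B F K); auto. apply HM; lia. }
    destruct (R_complete _ H) as [l Hl]. exists l; auto. }
  exists psi. apply (ns_of_bound a c N D f b alpha s B F K); auto.
  intros n x Hx. apply le_eps. intros e He.
  destruct (Hcv x Hx e He) as [M HM]. specialize (HM (n + M)%nat ltac:(lia)).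
  unfold R_dist, U in HM.
  pose proof (cauchy_bound a c N D f b alpha s B F K HH HP HKo n M x Hx).
  replace (iterT N D f b alpha 1 n f x - psi x) with
    ((iterT N D f b alpha 1 n f x - iterT N D f b alpha 1 (n + M) f x) - - (iterT N D f b alpha 1 (n + M) f x - psi x)) by ring.
  eapply Rle_trans. apply abs_sub_le. rewrite Rabs_Ropp. lra.
Qed.

Lemma ns_fractal_bound : forall a c N D f b alpha s B F K, Hyp a c N f b alpha s B ->
  is_partition a c N D -> Kok a c f s B F K ->
  forall n x, a <= x <= c ->
  Rabs (iterT N D f b alpha 1 n f x - ns_fractal N D f b alpha x) <= s ^ n * (2 * K).
Proof.
  intros. apply (ns_bound_of a c N D f b alpha s B F K); auto.
  unfold ns_fractal. apply epsilon_spec. eapply ns_exists; eauto.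
Qed.

Lemma CL : forall a c N D f b alpha s B r h, Hyp a c N f b alpha s B ->
  is_partition a c N D -> (1 <= r)%nat -> Cf a c f h ->
  forall eps, 0 < eps -> exists del, 0 < del /\ forall D', is_partition a c N D' ->
    close N D D' del -> forall x, a <= x <= c ->
    Rabs (T_op N D f b alpha r h x - T_op N D' f b alpha r h x) < eps.
Proof.
  intros a c N D f b alpha s B r h HH HP Hr Hh eps Heps.
  destruct (Phi_facts a c N f b alpha s B r h HH Hr Hh) as [HE HZ].
  destruct (GL a c N D _ HP HE HZ eps Heps) as [del [Hdel HG]].
  exists del. split; auto. intros D' HP' Hcl x Hx.
  rewrite !T_eq.
  replace (f x + GPhi N D (PhiR alpha b r h) x - (f x + GPhi N D' (PhiR alpha b r h) x))
    with (GPhi N D (PhiR alpha b r h) x - GPhi N D' (PhiR alpha b r h) x) by ring.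
  apply HG; auto. rewrite Rminus_diag, Rabs_R0. lra.
Qed.

Lemma IC : forall a c N D f b alpha s B, Hyp a c N f b alpha s B ->
  is_partition a c N D ->
  forall n k g, (1 <= k)%nat -> Cf a c f g ->
  forall eps, 0 < eps -> exists del, 0 < del /\ forall D', is_partition a c N D' ->
    close N D D' del -> forall x, a <= x <= c ->
    Rabs (iterT N D f b alpha k n g x - iterT N D' f b alpha k n g x) < eps.
Proof.
  intros a c N D f b alpha s B HH HP n. induction n; intros k g Hk Hg eps Heps.
  - exists 1. split. lra. intros. simpl. rewrite Rminus_diag, Rabs_R0. auto.
  - destruct (IHn (S k) g ltac:(lia) Hg (eps / 2) ltac:(lra)) as [d1 [Hd1 H1]].
    pose proof (iter_Cf a c N D f b alpha s B HH HP n (S k) g ltac:(lia) Hg) as Hh.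
    destruct (CL a c N D f b alpha s B k _ HH HP Hk Hh (eps / 2) ltac:(lra)) as [d2 [Hd2 H2]].
    exists (Rmin d1 d2). split. apply Rmin_pos; auto.
    intros D' HP' Hcl x Hx. simpl.
    assert (Hc1 : close N D D' d1) by (intros j Hj; eapply Rle_trans; [apply Hcl; auto | apply Rmin_l]).
    assert (Hc2 : close N D D' d2) by (intros j Hj; eapply Rle_trans; [apply Hcl; auto | apply Rmin_r]).
    specialize (H2 D' HP' Hc2 x Hx).
    pose proof (T_strict a c N D' f b alpha s B k (iterT N D f b alpha (S k) n g)
      (iterT N D' f b alpha (S k) n g) (eps / 2) HH HP' Hk (H1 D' HP' Hc1) x Hx) as H3.
    set (h := iterT N D f b alpha (S k) n g) in *.
    set (h' := iterT N D' f b alpha (S k) n g) in *.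
    replace (T_op N D f b alpha k h x - T_op N D' f b alpha k h' x) with
      ((T_op N D f b alpha k h x - T_op N D' f b alpha k h x) - - (T_op N D' f b alpha k h x - T_op N D' f b alpha k h' x)) by ring.
    eapply Rle_lt_trans. apply abs_sub_le. rewrite Rabs_Ropp. lra.
Qed.

Lemma sum_ge_term : forall (g : nat -> R) n, (forall i, 0 <= g i) ->
  forall j, (j <= n)%nat -> g j <= sum_f_R0 g n.
Proof.
  intros g n Hg. induction n; intros j Hj.
  - simpl. replace j with 0%nat by lia. lra.
  - simpl. destruct (Nat.eq_dec j (S n)).
    + subst. pose proof (cond_pos_sum g n Hg). lra.
    + pose proof (IHn j ltac:(lia)). pose proof (Hg (S n)). lra.
Qed.

Lemma dist2_close : forall N D D' del, dist2 N D D' < del -> close N D D' del.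
Proof.
  intros N D D' del H j Hj. unfold dist2 in H. left. eapply Rle_lt_trans; [|apply H].
  rewrite <- sqrt_Rsqr_abs. apply sqrt_le_1_alt.
  replace (Rsqr (D j - D' j)) with ((D j - D' j) ^ 2) by (unfold Rsqr; ring).
  apply (sum_ge_term (fun i => (D i - D' i) ^ 2) N); auto. intros i. simpl. rewrite Rmult_1_r. apply Rle_0_sqr.
Qed.
Theorem mainTheorem12 (a c d : R) (N : nat)
  (f : R -> R) (b : nat -> R -> R) (alpha : nat -> nat -> R -> R) :
  a < c -> (1 <= N)%nat -> 0 < d <= 1 ->
  Lip_d a c d f ->
  (forall r : nat, (1 <= r)%nat -> Lip_d a c d (b r)) ->
  (forall r : nat, (1 <= r)%nat -> b r a = f a /\ b r c = f c) ->
  (exists M : R, forall r : nat, (1 <= r)%nat ->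
      forall x, a <= x <= c -> Rabs (b r x) <= M) ->
  (forall i r : nat, (1 <= i <= N)%nat -> (1 <= r)%nat -> Lip_d a c d (alpha i r)) ->
  (exists s : R, s < 1 /\ forall i r : nat, (1 <= i <= N)%nat -> (1 <= r)%nat ->
      forall x, a <= x <= c -> Rabs (alpha i r x) <= s) ->
  forall Delta : nat -> R, is_partition a c N Delta ->
  forall eps : R, 0 < eps -> exists delta : R, 0 < delta /\
    forall Delta' : nat -> R, is_partition a c N Delta' ->
      dist2 N Delta Delta' < delta ->
      forall x : R, a <= x <= c ->
        Rabs (ns_fractal N Delta f b alpha x - ns_fractal N Delta' f b alpha x) < eps.
Proof.
  intros Hac HN1 Hd HfL HbL Hbe [M HM] HaL [s [Hs1 Has]] D HP eps Heps.
  assert (Hs0 : 0 <= s).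
  { pose proof (Has 1%nat 1%nat ltac:(lia) ltac:(lia) a ltac:(lra)). pose proof (Rabs_pos (alpha 1%nat 1%nat a)). lra. }
  assert (HM0 : 0 <= M).
  { pose proof (HM 1%nat ltac:(lia) a ltac:(lra)). pose proof (Rabs_pos (b 1%nat a)). lra. }
  assert (HfU : UC a c f) by (apply (Lip_UC a c d f); [lra | auto]).
  assert (HH : Hyp a c N f b alpha s M).
  { split; [auto | split; [lra | split; [auto | split]]].
    - intros r Hr. destruct (Hbe r Hr) as [E1 E2]. split; [|split; [auto|split; [auto|]]].
      apply (Lip_UC a c d); [lra | auto]. apply HM; auto.
    - intros i r Hi Hr. split. apply (Lip_UC a c d); [lra | auto]. apply Has; auto. }
  destruct (cont_UC_bnd a c f ltac:(lra) (UC_cont a c f HfU)) as [_ [F HF]].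
  assert (HF0 : 0 <= F) by (pose proof (HF a ltac:(lra)); pose proof (Rabs_pos (f a)); lra).
  set (Q := (F + s * M) / (1 - s)).
  assert (HQ : (1 - s) * Q = F + s * M) by (unfold Q; field; lra).
  assert (HQ0 : 0 <= Q) by nra.
  set (K := F + Q).
  assert (HKo : Kok a c f s M F K).
  { split; auto. unfold K. split; nra. }
  assert (HK0 : 0 <= K) by (unfold K; lra).
  destruct (small_pow s (4 * K) (eps / 2) ltac:(lra) ltac:(lra) ltac:(lra)) as [n0 Hn0].
  specialize (Hn0 n0 (le_n n0)).
  destruct (IC a c N D f b alpha s M HH HP n0 1 f (le_n 1) (conj HfU (conj eq_refl eq_refl)) (eps / 2) ltac:(lra))
    as [del [Hdel HI]].
  exists del. split; auto.
  intros D' HP' Hdist x Hx.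
  specialize (HI D' HP' (dist2_close N D D' del Hdist) x Hx).
  pose proof (ns_fractal_bound a c N D f b alpha s M F K HH HP HKo n0 x Hx) as B1.
  pose proof (ns_fractal_bound a c N D' f b alpha s M F K HH HP' HKo n0 x Hx) as B2.
  set (u := iterT N D f b alpha 1 n0 f x) in *.
  set (u' := iterT N D' f b alpha 1 n0 f x) in *.
  set (p := ns_fractal N D f b alpha x) in *.
  set (p' := ns_fractal N D' f b alpha x) in *.
  replace (p - p') with (- (u - p) - - ((u - u') + (u' - p'))) by ring.
  eapply Rle_lt_trans. apply abs_sub_le. rewrite !Rabs_Ropp.
  pose proof (Rabs_triang (u - u') (u' - p')).
  lra.
Qed.
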